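(* (1) There exist a connected undirected unweighted graph $G=(V,E)$ and $\delta>0$ such that the set function $S\mapsto\operatorname{fp}(G^S,\delta)$ on subsets of $V$ is not submodular; moreover, such $G$ and $\delta$ exist also with the additional requirement that every node of $G$ has a self-loop. (2) There exists a connected undirected unweighted graph $G=(V,E)$ such that the set function $S\mapsto\operatorname{fp}^{\infty}(G^S)$ is not submodular.
   Context: Positional Voter model. A graph $G=(V,E,w)$ has node set $V$ with $|V|=n$, edge set $E\subseteq V\times V$ and weights $w\colon E\to\mathbb{R}_{>0}$; $\operatorname{in}(u)=\{v\in V:(v,u)\in E\}$. ''Undirected unweighted'' means $E$ is symmetric and $w\equiv 1$; ''self-loop at $u$'' means $(u,u)\in E$. A configuration is a set $X\subseteq V$ (the nodes carrying the novel trait $A$). Given a biased set $S\subseteq V$ and bias $\delta\ge 0$, define $f^S_X(v\mid u)=1+\delta$ if $v\in X$ and $u\in S$, and $1$ otherwise. The process $(\mathcal{X}_t)_{t\ge0}$: given $\mathcal{X}_t=X$, a node $u$ is chosen uniformly at random from $V$, then $v\in\operatorname{in}(u)$ is chosen with probability $\frac{f^S_X(v\mid u)\,w(v,u)}{\sum_{x\in\operatorname{in}(u)} f^S_X(x\mid u)\,w(x,u)}$, and $\mathcal{X}_{t+1}=X\cup\{u\}$ if $v\in X$, $\mathcal{X}_{t+1}=X\setminus\{u\}$ otherwise. Define $\operatorname{fp}(G^S,\delta,X)=\mathbb{P}[\exists t\ge0:\mathcal{X}_t=V\mid\mathcal{X}_0=X]$, $\operatorname{fp}(G^S,\delta)=\frac1n\sum_{u\in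 V}\operatorname{fp}(G^S,\delta,\{u\})$, and $\operatorname{fp}^{\infty}(G^S)=\lim_{\delta\to\infty}\operatorname{fp}(G^S,\delta)$. A set function $f$ on subsets of $V$ is submodular if $f(S_1)+f(S_2)\ge f(S_1\cup S_2)+f(S_1\cap S_2)$ for all $S_1,S_2\subseteq V$. *)

(* Defs.v *)
From HB Require Import structures.
From mathcomp Require Import all_boot all_order all_algebra.
From mathcomp Require Import all_classical all_reals all_analysis.
Set Implicit Arguments. Unset Strict Implicit. Unset Printing Implicit Defensive.
Import Order.TTheory GRing.Theory Num.Theory.
Import numFieldNormedType.Exports.
Local Open Scope ring_scope.

(* A graph on node type T : finType is an edge relation e : rel T,
   (v,u) \in E  <->  e v u.  Unweighted: w = 1 on every edge. *)
Definition undirected (T : finType) (e : rel T) : Prop := forall x y, e x y = e y x.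
Definition connected_graph (T : finType) (e : rel T) : Prop := forall x y, connect e x y.
Definition all_self_loops (T : finType) (e : rel T) : Prop := forall x, e x x.

Section PVM.
Variables (R : realType) (T : finType) (e : rel T).

Definition fbias (S : {set T}) (delta : R) (X : {set T}) (v u : T) : R :=
  if (v \in X) && (u \in S) then 1 + delta else 1.

Definition pick_prob (S : {set T}) (delta : R) (X : {set T}) (u v : T) : R :=
  (#|T|%:R)^-1 * (fbias S delta X v u /
     \sum_(x | e x u) fbias S delta X x u).

Definition next_conf (X : {set T}) (u v : T) : {set T} :=
  if v \in X then u |: X else X :\ u.

(* hit S delta t X = P[ exists s <= t, X_s = V | X_0 = X ] *)
Fixpoint hit (S : {set T}) (delta : R) (t : nat) (X : {set T}) : R :=
  match t with
  | 0 => (X == [set: T])%:R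
  | t'.+1 => if X == [set: T] then 1 else
      \sum_(u : T) \sum_(v | e v u) pick_prob S delta X u v * hit S delta t' (next_conf X u v)
  end.

Definition fp_from (S : {set T}) (delta : R) (X : {set T}) : R :=
  limn (fun t => hit S delta t X).

Definition fp (S : {set T}) (delta : R) : R :=
  (#|T|%:R)^-1 * \sum_(u : T) fp_from S delta [set u].

Definition fp_inf (S : {set T}) : R := lim ((fp S) @ +oo)%classic.

Definition fp_inf_exists (S : {set T}) : Prop := cvg ((fp S) @ +oo)%classic.
End PVM.

Definition submodular (T : finType) (R : realType) (f : {set T} -> R) : Prop :=
  forall S1 S2 : {set T}, f (S1 :|: S2) + f (S1 :&: S2) <= f S1 + f S2.

(* Main.v *)
Require Import Defs.
From HB Require Import structures.
From mathcomp Require Import all_boot all_order all_algebra.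
From mathcomp Require Import all_classical all_reals all_analysis.
From mathcomp Require Import ring lra.
Import Order.TTheory GRing.Theory Num.Theory.
Import numFieldNormedType.Exports.
Local Open Scope ring_scope.
Set Implicit Arguments. Unset Strict Implicit. Unset Printing Implicit Defensive.

Section Gen.
Variables (R : realType) (T : finType) (e : rel T) (S : {set T}) (delta : R).
Hypothesis hd : 0 <= delta.
Hypothesis hin : forall u, exists v, e v u.
Variable x0 : T.

Local Notation P := (pick_prob e S delta).
Local Notation hitt := (hit e S delta).

Lemma fbias_gt0 X v u : 0 < fbias S delta X v u.
Proof. have := hd; rewrite /fbias; case: ifP => _ h; lra. Qed.

Lemma den_gt0 X u : 0 < \sum_(x | e x u) fbias S delta X x u.
Proof.
have [v hv] := hin u.
rewrite (bigD1 v) //=.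
apply: (lt_le_trans (fbias_gt0 X v u)).
rewrite lerDl; apply: sumr_ge0 => i _; exact/ltW/fbias_gt0.
Qed.

Lemma cardT_gt0 : (0 < #|T|)%N.
Proof. by apply/card_gt0P; exists x0. Qed.

Lemma P_ge0 X u v : 0 <= P X u v.
Proof.
rewrite /pick_prob; apply: mulr_ge0; first by rewrite invr_ge0 ler0n.
apply: divr_ge0; [exact/ltW/fbias_gt0 | exact/ltW/den_gt0].
Qed.

Lemma P_gt0 X u v : 0 < P X u v.
Proof.
rewrite /pick_prob; apply: mulr_gt0; first by rewrite invr_gt0 ltr0n cardT_gt0.
apply: divr_gt0; [exact/fbias_gt0 | exact/den_gt0].
Qed.

Lemma P_sum X : \sum_u \sum_(v | e v u) P X u v = 1.
Proof.
rewrite /pick_prob.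
transitivity (\sum_(u : T) (#|T|%:R : R)^-1).
  apply: eq_bigr => u _; rewrite -mulr_sumr -mulr_suml mulfV ?mulr1 //.
  exact/lt0r_neq0/den_gt0.
rewrite sumr_const -[_^-1 *+ _]mulr_natr mulVf //.
by rewrite pnatr_eq0 -lt0n cardT_gt0.
Qed.

Lemma setT_neq0 : [set: T] != finset.set0.
Proof. by apply/finset.set0Pn; exists x0; rewrite inE. Qed.

Lemma hit_T t : hitt t [set: T] = 1.
Proof. by case: t => [|t] /=; rewrite eqxx. Qed.

Lemma next0 (u v : T) : next_conf finset.set0 u v = finset.set0.
Proof. by rewrite /next_conf inE finset.set0D. Qed.

Lemma hit_0 t : hitt t finset.set0 = 0.
Proof.
elim: t => [|t IH] /=; first by rewrite eq_sym (negbTE setT_neq0).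
rewrite eq_sym (negbTE setT_neq0).
apply: big1 => u _; apply: big1 => v _; by rewrite next0 IH mulr0.
Qed.

Lemma hit_bound t X : 0 <= hitt t X <= 1.
Proof.
elim: t X => [|t IH] X /=; first by case: (X == [set: T]); rewrite /= ?ler01 ?lexx.
case: ifP => _; first by rewrite ler01 lexx.
apply/andP; split.
  apply: sumr_ge0 => u _; apply: sumr_ge0 => v _.
  by apply: mulr_ge0; [exact: P_ge0 | case/andP: (IH (next_conf X u v))].
rewrite -(P_sum X); apply: ler_sum => u _; apply: ler_sum => v _.
by apply: ler_piMr; [exact: P_ge0 | case/andP: (IH (next_conf X u v))].
Qed.

Lemma hit_mono t X : hitt t X <= hitt t.+1 X.
Proof.
elim: t X => [|t IH] X.
  rewrite /=; case: ifP => _ //.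
  apply: sumr_ge0 => u _; apply: sumr_ge0 => v _.
  by apply: mulr_ge0; [exact: P_ge0 | exact: ler0n].
rewrite [hitt t.+1 X]/= [hitt t.+2 X]/=; case: ifP => _ //.
apply: ler_sum => u _; apply: ler_sum => v _.
by apply: ler_wpM2l; [exact: P_ge0 | exact: IH].
Qed.

Lemma hit_cvg X : cvgn (fun t => hitt t X).
Proof.
apply/cvg_ex; eexists; apply: nondecreasing_cvgn.
  by apply/nondecreasing_seqP => n; exact: hit_mono.
exists 1 => _ [n _ <-]; by case/andP: (hit_bound n X).
Qed.


Local Notation L := (fp_from e S delta).

Lemma cvg_sumf (I : finType) (Q : pred I) (f : I -> nat -> R) (l : I -> R) :
  (forall i, f i n @[n --> \oo] --> l i)%classic ->
  ((\sum_(i | Q i) f i n) @[n --> \oo] --> \sum_(i | Q i) l i)%classic.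
Proof.
move=> h; apply: cvg_big => //; first exact: add_continuous.
Qed.

Lemma L_cvg X : ((fun t => hitt t X) @ \oo --> L X)%classic.
Proof. exact: hit_cvg. Qed.

Lemma L_harm X : X != [set: T] ->
  L X = \sum_u \sum_(v | e v u) P X u v * L (next_conf X u v).
Proof.
move=> nT.
have A : ((fun t => hitt t.+1 X) @ \oo --> L X)%classic.
  by rewrite (cvg_shiftS (fun t => hitt t X)); exact: L_cvg.
have B : ((fun t => hitt t.+1 X) @ \oo -->
   \sum_u \sum_(v | e v u) P X u v * L (next_conf X u v))%classic.
  have -> : (fun t => hitt t.+1 X) = (fun t => \sum_u \sum_(v | e v u) P X u v * hitt t (next_conf X u v)).
    by apply: funext => t /=; rewrite (negbTE nT).
  apply: cvg_sumf => u; apply: cvg_sumf => v.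
  apply: cvgMr; exact: L_cvg.
exact: (cvg_unique _ A B).
Qed.

Lemma L_T : L [set: T] = 1.
Proof.
rewrite /fp_from (_ : (fun t => hitt t [set: T]) = fun _ => 1).
  exact: lim_cst.
by apply: funext => t; rewrite hit_T.
Qed.

Lemma L_0 : L finset.set0 = 0.
Proof.
rewrite /fp_from (_ : (fun t => hitt t finset.set0) = fun _ => 0).
  exact: lim_cst.
by apply: funext => t; rewrite hit_0.
Qed.


Definition harm (g : {set T} -> R) := forall X, X != [set: T] -> X != finset.set0 ->
  g X = \sum_u \sum_(v | e v u) P X u v * g (next_conf X u v).

Hypothesis hprog : forall X : {set T}, X != finset.set0 -> X != [set: T] ->
  exists u v, [/\ u \notin X, v \in X & e v u].

Lemma maxp (g : {set T} -> R) : g [set: T] = 0 -> g finset.set0 = 0 ->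
  harm g -> forall X, g X <= 0.
Proof.
move=> gT g0 gh X.
rewrite leNgt; apply/negP => gX.
have [Y0 _ hY0] := @arg_maxP _ R _ X xpredT g isT.
set M := g Y0 in hY0.
have Mpos : 0 < M := lt_le_trans gX (hY0 X isT).
have [Z /eqP gZ hZ] := @arg_maxnP _ Y0 (fun Z => g Z == M) (fun Z => #|Z|) (eqxx _).
have nZT : Z != [set: T] by apply/eqP => ZT; move: gZ; rewrite ZT gT => M0; move: Mpos; rewrite -M0 ltxx.
have nZ0 : Z != finset.set0 by apply/eqP => ZT; move: gZ; rewrite ZT g0 => M0; move: Mpos; rewrite -M0 ltxx.
have [u [v [uZ vZ evu]]] := hprog nZ0 nZT.
have SM : \sum_w \sum_(x | e x w) P Z w x * M = M.
  rewrite -[RHS]mul1r -(P_sum Z) mulr_suml; apply: eq_bigr => w _; by rewrite mulr_suml.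
have eq0 : \sum_w \sum_(x | e x w) P Z w x * (M - g (next_conf Z w x)) = 0.
  transitivity (\sum_w \sum_(x | e x w) P Z w x * M - \sum_w \sum_(x | e x w) P Z w x * g (next_conf Z w x)).
    rewrite -sumrB; apply: eq_bigr => w _; rewrite -sumrB; apply: eq_bigr => x _.
    by rewrite mulrBr.
  by rewrite SM -gh // gZ subrr.
have tge0 : forall w x, 0 <= P Z w x * (M - g (next_conf Z w x)).
  move=> w x; apply: mulr_ge0; first exact: P_ge0.
  by rewrite subr_ge0; exact: hY0.
have inner := psumr_eq0P (fun w _ => sumr_ge0 _ (fun x _ => tge0 w x)) eq0 (isT : xpredT u).
have := psumr_eq0P (fun x _ => tge0 u x) inner evu.
move/eqP; rewrite mulf_eq0 (negbTE (lt0r_neq0 (P_gt0 Z u v))) /= subr_eq0.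
rewrite /next_conf vZ => /eqP gu.
have := hZ (u |: Z); rewrite -gu eqxx => /(_ isT).
by rewrite cardsU1 uZ /= add1n ltnn.
Qed.

Lemma L_harmonic : harm L.
Proof. by move=> X nT _; exact: L_harm. Qed.

Lemma fp_from_eq (h : {set T} -> R) : h [set: T] = 1 -> h finset.set0 = 0 ->
  harm h -> forall X, L X = h X.
Proof.
move=> hT h0 hh X.
have harmB : forall f g, harm f -> harm g -> harm (fun Y => f Y - g Y).
  move=> f g hf hg Y nT n0; rewrite hf // hg // -sumrB; apply: eq_bigr => w _.
  by rewrite -sumrB; apply: eq_bigr => x _; rewrite mulrBr.
apply/eqP; rewrite eq_le; apply/andP; split.
  rewrite -subr_le0; apply: (@maxp (fun Y => L Y - h Y)) => //.
  - by rewrite L_T hT subrr.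
  - by rewrite L_0 h0 subrr.
  - exact: harmB L_harmonic hh.
rewrite -subr_le0; apply: (@maxp (fun Y => h Y - L Y)) => //.
- by rewrite L_T hT subrr.
- by rewrite L_0 h0 subrr.
- exact: harmB hh L_harmonic.
Qed.

End Gen.

Definition o0 : 'I_3 := @Ordinal 3 0 isT.
Definition o1 : 'I_3 := @Ordinal 3 1 isT.
Definition o2 : 'I_3 := @Ordinal 3 2 isT.
Definition e3 : rel 'I_3 := fun v u => v != u.
Definition e3l : rel 'I_3 := fun _ _ => true.

Lemma ord3P (x : 'I_3) : [\/ x = o0, x = o1 | x = o2].
Proof.
case: x => [[|[|[|m]]] Hm] //.
- by apply: Or31; apply: val_inj.
- by apply: Or32; apply: val_inj.
- by apply: Or33; apply: val_inj.
Qed.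

Lemma sum3 (R : realType) (F : 'I_3 -> R) : \sum_(u : 'I_3) F u = F o0 + F o1 + F o2.
Proof.
rewrite !big_ord_recl big_ord0 addr0 addrA.
by congr (F _ + F _ + F _); apply: val_inj.
Qed.

Lemma sum3c (R : realType) (Q : pred 'I_3) (F : 'I_3 -> R) :
  \sum_(u | Q u) F u = (if Q o0 then F o0 else 0) + (if Q o1 then F o1 else 0) + (if Q o2 then F o2 else 0).
Proof. by rewrite big_mkcond sum3. Qed.

Lemma setT3 (X : {set 'I_3}) : (X == [set: 'I_3]) = [&& o0 \in X, o1 \in X & o2 \in X].
Proof.
apply/eqP/and3P => [->|[h0 h1 h2]]; first by rewrite !inE.
apply/setP => x; rewrite inE; by case: (ord3P x) => ->.
Qed.

Lemma set03 (X : {set 'I_3}) : (X == finset.set0) = ~~ [|| o0 \in X, o1 \in X | o2 \in X].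
Proof.
apply/eqP/idP => [->|]; first by rewrite !inE.
rewrite !negb_or => /and3P [h0 h1 h2].
apply/setP => x; rewrite inE; case: (ord3P x) => ->; exact/negbTE.
Qed.

Lemma mem_nextc (T : finType) (X : {set T}) u v j :
  (j \in next_conf X u v) = if v \in X then (j == u) || (j \in X) else (j != u) && (j \in X).
Proof. by rewrite /next_conf; case: (v \in X); rewrite !inE. Qed.

Definition av (R : realType) (S : {set 'I_3}) (d : R) (u : 'I_3) : R :=
  if u \in S then 1 + d else 1.

Lemma fbiasE (R : realType) S (d : R) X v u :
  fbias S d X v u = if v \in X then av S d u else 1.
Proof. by rewrite /fbias /av; case: (v \in X); case: (u \in S). Qed.

Section NoLoop.
Variable R : realType.
Definition Dn (r0 r1 r2 : R) : R := (9 + 6*r2 + r2*r2 + 6*r1 - 4*r1*r2 - 2*r1*r2*r2 + r1*r1 - 2*r1*r1*r2 + r1*r1*r2*r2 + 6*r0 - 4*r0*r2 - 2*r0*r2*r2 - 4*r0*r1 - 6*r0*r1*r2 + 2*r0*r1*r2*r2 - 2*r0*r1*r1 + 2*r0*r1*r1*r2 + r0*r0 - 2*r0*r0*r2 + r0*r0*r2*r2 - 2*r0*r0*r1 + 2*r0*r0*r1*r2 + r0*r0*r1*r1).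
Definition N1 (r0 r1 r2 : R) : R := (6 + 2*r2 + 2*r1 - 8*r1*r2 - 2*r1*r2*r2 - 2*r1*r1*r2 + 2*r1*r1*r2*r2 + 2*r0 - 5*r0*r2 - r0*r2*r2 - 5*r0*r1 + 2*r0*r1*r2 + 5*r0*r1*r2*r2 - r0*r1*r1 + 5*r0*r1*r1*r2 - 2*r0*r1*r1*r2*r2 - r0*r0*r2 + r0*r0*r2*r2 - r0*r0*r1 + 4*r0*r0*r1*r2 - 2*r0*r0*r1*r2*r2 + r0*r0*r1*r1 - 2*r0*r0*r1*r1*r2).
Definition N2 (r0 r1 r2 : R) : R := (6 + 2*r2 + 2*r1 - 5*r1*r2 - r1*r2*r2 - r1*r1*r2 + r1*r1*r2*r2 + 2*r0 - 8*r0*r2 - 2*r0*r2*r2 - 5*r0*r1 + 2*r0*r1*r2 + 5*r0*r1*r2*r2 - r0*r1*r1 + 4*r0*r1*r1*r2 - 2*r0*r1*r1*r2*r2 - 2*r0*r0*r2 + 2*r0*r0*r2*r2 - r0*r0*r1 + 5*r0*r0*r1*r2 - 2*r0*r0*r1*r2*r2 + r0*r0*r1*r1 - 2*r0*r0*r1*r1*r2).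
Definition N3 (r0 r1 r2 : R) : R := (9 + 6*r2 + r2*r2 + 3*r1 - 8*r1*r2 - 3*r1*r2*r2 - 2*r1*r1*r2 + 2*r1*r1*r2*r2 + 3*r0 - 8*r0*r2 - 3*r0*r2*r2 - 6*r0*r1 + 6*r0*r1*r2*r2 - r0*r1*r1 + 5*r0*r1*r1*r2 - 2*r0*r1*r1*r2*r2 - 2*r0*r0*r2 + 2*r0*r0*r2*r2 - r0*r0*r1 + 5*r0*r0*r1*r2 - 2*r0*r0*r1*r2*r2 + r0*r0*r1*r1 - 2*r0*r0*r1*r1*r2).
Definition N4 (r0 r1 r2 : R) : R := (6 + 2*r2 + 2*r1 - 5*r1*r2 - r1*r2*r2 - r1*r1*r2 + r1*r1*r2*r2 + 2*r0 - 5*r0*r2 - r0*r2*r2 - 8*r0*r1 + 2*r0*r1*r2 + 4*r0*r1*r2*r2 - 2*r0*r1*r1 + 5*r0*r1*r1*r2 - 2*r0*r1*r1*r2*r2 - r0*r0*r2 + r0*r0*r2*r2 - 2*r0*r0*r1 + 5*r0*r0*r1*r2 - 2*r0*r0*r1*r2*r2 + 2*r0*r0*r1*r1 - 2*r0*r0*r1*r1*r2).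
Definition N5 (r0 r1 r2 : R) : R := (9 + 3*r2 + 6*r1 - 8*r1*r2 - 2*r1*r2*r2 + r1*r1 - 3*r1*r1*r2 + 2*r1*r1*r2*r2 + 3*r0 - 6*r0*r2 - r0*r2*r2 - 8*r0*r1 + 5*r0*r1*r2*r2 - 3*r0*r1*r1 + 6*r0*r1*r1*r2 - 2*r0*r1*r1*r2*r2 - r0*r0*r2 + r0*r0*r2*r2 - 2*r0*r0*r1 + 5*r0*r0*r1*r2 - 2*r0*r0*r1*r2*r2 + 2*r0*r0*r1*r1 - 2*r0*r0*r1*r1*r2).
Definition N6 (r0 r1 r2 : R) : R := (9 + 3*r2 + 3*r1 - 6*r1*r2 - r1*r2*r2 - r1*r1*r2 + r1*r1*r2*r2 + 6*r0 - 8*r0*r2 - 2*r0*r2*r2 - 8*r0*r1 + 5*r0*r1*r2*r2 - 2*r0*r1*r1 + 5*r0*r1*r1*r2 - 2*r0*r1*r1*r2*r2 + r0*r0 - 3*r0*r0*r2 + 2*r0*r0*r2*r2 - 3*r0*r0*r1 + 6*r0*r0*r1*r2 - 2*r0*r0*r1*r2*r2 + 2*r0*r0*r1*r1 - 2*r0*r0*r1*r1*r2).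

Definition H (r0 r1 r2 : R) (b0 b1 b2 : bool) : R :=
  match b0, b1, b2 with
  | false, false, false => 0
  | true, false, false => N1 r0 r1 r2 / Dn r0 r1 r2
  | false, true, false => N2 r0 r1 r2 / Dn r0 r1 r2
  | true, true, false => N3 r0 r1 r2 / Dn r0 r1 r2
  | false, false, true => N4 r0 r1 r2 / Dn r0 r1 r2
  | true, false, true => N5 r0 r1 r2 / Dn r0 r1 r2
  | false, true, true => N6 r0 r1 r2 / Dn r0 r1 r2
  | true, true, true => 1
  end.

Lemma K3_harm (S : {set 'I_3}) (d : R) (r0 r1 r2 : R) :
  0 < r0 -> 0 < r1 -> 0 < r2 -> r0 < 1 -> r1 < 1 -> r2 < 1 ->
  Dn r0 r1 r2 != 0 ->
  av S d o0 = (1 - r0) / r0 -> av S d o1 = (1 - r1) / r1 -> av S d o2 = (1 - r2) / r2 ->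
  harm e3 S d (fun X => H r0 r1 r2 (o0 \in X) (o1 \in X) (o2 \in X)).
Proof.
move=> n0 n1 n2 m0 m1 m2 nD a0 a1 a2 X nT nE.
rewrite /pick_prob card_ord sum3 !sum3c /= !fbiasE a0 a1 a2 !mem_nextc /=.
move: nT nE; rewrite setT3 set03.
case: (o0 \in X); case: (o1 \in X); case: (o2 \in X) => //= _ _.
all: rewrite /Dn /N1 /N2 /N3 /N4 /N5 /N6.
all: field; repeat (apply/andP; split); first [exact: nD | apply/eqP => ?; lra].
Qed.

Lemma Dn_gt0 r0 r1 r2 : 0 <= r0 <= 1/2 -> 0 <= r1 <= 1/2 -> 0 <= r2 <= 1/2 -> 0 < Dn r0 r1 r2.
Proof.
move=> /andP[a0 b0] /andP[a1 b1] /andP[a2 b2]; rewrite /Dn.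
have h01 : 0 <= r0 * r1 <= 1/4 by apply/andP; split; nra.
have h02 : 0 <= r0 * r2 <= 1/4 by apply/andP; split; nra.
have h12 : 0 <= r1 * r2 <= 1/4 by apply/andP; split; nra.
nra.
Qed.
End NoLoop.

Lemma hin3 : forall u : 'I_3, exists v, e3 v u.
Proof. by move=> u; case: (ord3P u) => ->; [exists o1 | exists o0 | exists o0]. Qed.

Lemma hin3l : forall u : 'I_3, exists v, e3l v u.
Proof. by move=> u; exists u. Qed.

Lemma hprog_gen (e : rel 'I_3) : (forall u v, u != v -> e v u) ->
  forall X : {set 'I_3}, X != finset.set0 -> X != [set: 'I_3] ->
  exists u v, [/\ u \notin X, v \in X & e v u].
Proof.
move=> he X n0 nT.
have [v vX] := finset.set0Pn _ n0.
have [u uX] : exists u, u \notin X.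
  apply/existsP; move: nT; apply: contraR; rewrite negb_exists => /forallP h.
  by apply/eqP/setP => x; rewrite inE; move: (h x); rewrite negbK.
exists u, v; split => //; apply: he; apply/eqP => uv; by rewrite uv vX in uX.
Qed.

Lemma hprog3 (X : {set 'I_3}) : X != finset.set0 -> X != [set: 'I_3] ->
  exists u v, [/\ u \notin X, v \in X & e3 v u].
Proof. by apply: hprog_gen => u v; rewrite /e3 eq_sym. Qed.

Lemma hprog3l (X : {set 'I_3}) : X != finset.set0 -> X != [set: 'I_3] ->
  exists u v, [/\ u \notin X, v \in X & e3l v u].
Proof. by apply: hprog_gen. Qed.


Section FpK3.
Variable R : realType.

Definition rr (S : {set 'I_3}) (d : R) u := (av S d u + 1)^-1.

Lemma rr_facts S (d : R) u : 0 <= d ->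
  [/\ 0 < rr S d u, rr S d u <= 1/2 & av S d u = (1 - rr S d u) / rr S d u].
Proof.
move=> hd.
have a1 : 1 <= av S d u by rewrite /av; case: ifP => _; lra.
have xp : 0 < av S d u + 1 by lra.
have yp : 0 < rr S d u by rewrite /rr invr_gt0.
have xy : (av S d u + 1) * rr S d u = 1 by rewrite /rr mulfV // lt0r_neq0.
split => //; first nra.
rewrite /rr; field.
by repeat (apply/andP; split); apply/eqP => ?; lra.
Qed.

Lemma fpK3 (S : {set 'I_3}) (d : R) : 0 <= d ->
  fp e3 S d = (N1 (rr S d o0) (rr S d o1) (rr S d o2) + N2 (rr S d o0) (rr S d o1) (rr S d o2)
     + N4 (rr S d o0) (rr S d o1) (rr S d o2)) / (3 * Dn (rr S d o0) (rr S d o1) (rr S d o2)).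
Proof.
move=> hd.
have [p0 q0 a0] := rr_facts S o0 hd.
have [p1 q1 a1] := rr_facts S o1 hd.
have [p2 q2 a2] := rr_facts S o2 hd.
set r0 := rr S d o0 in p0 q0 a0 *.
set r1 := rr S d o1 in p1 q1 a1 *.
set r2 := rr S d o2 in p2 q2 a2 *.
have Dp : 0 < Dn r0 r1 r2 by apply: Dn_gt0; apply/andP; split; lra.
have K := @fp_from_eq R _ e3 S d hd hin3 o0 hprog3
  (fun X => H r0 r1 r2 (o0 \in X) (o1 \in X) (o2 \in X)).
have hh : harm e3 S d (fun X => H r0 r1 r2 (o0 \in X) (o1 \in X) (o2 \in X)).
  apply: K3_harm => //; try lra; exact: lt0r_neq0.
rewrite /fp card_ord sum3 !(K _ _ hh) ?inE //=.
by field; repeat (apply/andP; split); apply/eqP => ?; lra.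
Qed.
End FpK3.

Section Lim.
Variable R : realType.

Lemma cD (f g : R -> R) (a b : R) : (f x @[x --> +oo] --> a)%classic -> (g x @[x --> +oo] --> b)%classic ->
  ((f x + g x) @[x --> +oo] --> a + b)%classic.
Proof. move=> hf hg; exact: cvgD. Qed.
Lemma cN (f : R -> R) (a : R) : (f x @[x --> +oo] --> a)%classic ->
  ((- f x) @[x --> +oo] --> - a)%classic.
Proof. move=> hf; exact: cvgN. Qed.
Lemma cM (f g : R -> R) (a b : R) : (f x @[x --> +oo] --> a)%classic -> (g x @[x --> +oo] --> b)%classic ->
  ((f x * g x) @[x --> +oo] --> a * b)%classic.
Proof. move=> hf hg; exact: cvgM. Qed.
Lemma cV (f : R -> R) (a : R) : a != 0 -> (f x @[x --> +oo] --> a)%classic ->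
  ((f x)^-1 @[x --> +oo] --> a^-1)%classic.
Proof. move=> ha hf; exact: cvgV. Qed.
Lemma cC (c : R) : ((fun _ : R => c) x @[x --> +oo] --> c)%classic.
Proof. exact: cvg_cst. Qed.

Definition Phi (r0 r1 r2 : R) := (N1 r0 r1 r2 + N2 r0 r1 r2 + N4 r0 r1 r2) / (3 * Dn r0 r1 r2).

Definition lS (S : {set 'I_3}) (u : 'I_3) : R := if u \in S then 0 else 1/2.

Lemma rr_cvg (S : {set 'I_3}) u : (rr S x u @[x --> +oo] --> lS S u)%classic.
Proof.
rewrite /rr /av /lS; case: (u \in S).
  apply/gtr0_cvgV0.
    near=> x. suff : 0 <= x by move=> ?; lra.
    near: x; exact: nbhs_pinfty_ge.
  apply/cvgryPge => A; near=> x. suff : A - 2 <= x by move=> ?; lra.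
  near: x; apply: nbhs_pinfty_ge; exact: num_real.
have -> : (fun x : R => ((if false then 1 + x else 1) + 1)^-1) = fun _ => 1/2.
  by apply: funext => x /=; field.
exact: cC.
Unshelve. all: by end_near.
Qed.

Inductive pe := PV of nat | PC of R | PA of pe & pe | PM of pe & pe | PN of pe.

Fixpoint ev (env : nat -> R) (p : pe) : R :=
  match p with
  | PV i => env i
  | PC c => c
  | PA a b => ev env a + ev env b
  | PM a b => ev env a * ev env b
  | PN a => - ev env a
  end.

Lemma ev_cvg (fs : nat -> R -> R) (ls : nat -> R) p :
  (forall i, (fs i x @[x --> +oo] --> ls i)%classic) ->
  (ev (fun i => fs i x) p @[x --> +oo] --> ev ls p)%classic.
Proof.
move=> h; elim: p => /= [i|c|a ha b hb|a ha b hb|a ha].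
- exact: h.
- exact: cC.
- exact: cD.
- exact: cM.
- exact: cN.
Qed.

Definition env3 (a b c : R) (i : nat) : R := match i with 0 => a | 1 => b | _ => c end.

Definition pD : pe := (PA (PA (PA (PA (PA (PA (PA (PA (PA (PA (PA (PA (PA (PA (PA (PA (PA (PA (PA (PA (PA (PA (PC 9) (PM (PC 6) (PV 2))) (PM (PV 2) (PV 2))) (PM (PC 6) (PV 1))) (PN (PM (PM (PC 4) (PV 1)) (PV 2)))) (PN (PM (PM (PM (PC 2) (PV 1)) (PV 2)) (PV 2)))) (PM (PV 1) (PV 1))) (PN (PM (PM (PM (PC 2) (PV 1)) (PV 1)) (PV 2)))) (PM (PM (PM (PV 1) (PV 1)) (PV 2)) (PV 2))) (PM (PC 6) (PV 0))) (PN (PM (PM (PC 4) (PV 0)) (PV 2)))) (PN (PM (PM (PM (PC 2) (PV 0)) (PV 2)) (PV 2)))) (PN (PM (PM (PC 4) (PV 0)) (PV 1)))) (PN (PM (PM (PM (PC 6) (PV 0)) (PV 1)) (PV 2)))) (PM (PM (PM (PM (PC 2) (PV 0)) (PV 1)) (PV 2)) (PV 2))) (PN (PM (PM (PM (PC 2) (PV 0)) (PV 1)) (PV 1)))) (PM (PM (PM (PM (PC 2) (PV 0)) (PV 1)) (PV 1)) (PV 2))) (PM (PV 0) (PV 0))) (PN (PM (PM (PM (PC 2) (PV 0)) (PV 0)) (PV 2)))) (PM (PM (PM (PV 0) (PV 0)) (PV 2)) (PV 2))) (PN (PM (PM (PM (PC 2) (PV 0)) (PV 0)) (PV 1)))) (PM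 (PM (PM (PM (PC 2) (PV 0)) (PV 0)) (PV 1)) (PV 2))) (PM (PM (PM (PV 0) (PV 0)) (PV 1)) (PV 1))).
Definition pN1 : pe := (PA (PA (PA (PA (PA (PA (PA (PA (PA (PA (PA (PA (PA (PA (PA (PA (PA (PA (PA (PA (PA (PA (PC 6) (PM (PC 2) (PV 2))) (PM (PC 2) (PV 1))) (PN (PM (PM (PC 8) (PV 1)) (PV 2)))) (PN (PM (PM (PM (PC 2) (PV 1)) (PV 2)) (PV 2)))) (PN (PM (PM (PM (PC 2) (PV 1)) (PV 1)) (PV 2)))) (PM (PM (PM (PM (PC 2) (PV 1)) (PV 1)) (PV 2)) (PV 2))) (PM (PC 2) (PV 0))) (PN (PM (PM (PC 5) (PV 0)) (PV 2)))) (PN (PM (PM (PV 0) (PV 2)) (PV 2)))) (PN (PM (PM (PC 5) (PV 0)) (PV 1)))) (PM (PM (PM (PC 2) (PV 0)) (PV 1)) (PV 2))) (PM (PM (PM (PM (PC 5) (PV 0)) (PV 1)) (PV 2)) (PV 2))) (PN (PM (PM (PV 0) (PV 1)) (PV 1)))) (PM (PM (PM (PM (PC 5) (PV 0)) (PV 1)) (PV 1)) (PV 2))) (PN (PM (PM (PM (PM (PM (PC 2) (PV 0)) (PV 1)) (PV 1)) (PV 2)) (PV 2)))) (PN (PM (PM (PV 0) (PV 0)) (PV 2)))) (PM (PM (PM (PV 0) (PV 0)) (PV 2)) (PV 2))) (PN (PM (PM (PV 0) (PV 0)) (PV 1)))) (PM (PM (PM (PM (PC 4) (PV 0)) (PV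 0)) (PV 1)) (PV 2))) (PN (PM (PM (PM (PM (PM (PC 2) (PV 0)) (PV 0)) (PV 1)) (PV 2)) (PV 2)))) (PM (PM (PM (PV 0) (PV 0)) (PV 1)) (PV 1))) (PN (PM (PM (PM (PM (PM (PC 2) (PV 0)) (PV 0)) (PV 1)) (PV 1)) (PV 2)))).
Definition pN2 : pe := (PA (PA (PA (PA (PA (PA (PA (PA (PA (PA (PA (PA (PA (PA (PA (PA (PA (PA (PA (PA (PA (PA (PC 6) (PM (PC 2) (PV 2))) (PM (PC 2) (PV 1))) (PN (PM (PM (PC 5) (PV 1)) (PV 2)))) (PN (PM (PM (PV 1) (PV 2)) (PV 2)))) (PN (PM (PM (PV 1) (PV 1)) (PV 2)))) (PM (PM (PM (PV 1) (PV 1)) (PV 2)) (PV 2))) (PM (PC 2) (PV 0))) (PN (PM (PM (PC 8) (PV 0)) (PV 2)))) (PN (PM (PM (PM (PC 2) (PV 0)) (PV 2)) (PV 2)))) (PN (PM (PM (PC 5) (PV 0)) (PV 1)))) (PM (PM (PM (PC 2) (PV 0)) (PV 1)) (PV 2))) (PM (PM (PM (PM (PC 5) (PV 0)) (PV 1)) (PV 2)) (PV 2))) (PN (PM (PM (PV 0) (PV 1)) (PV 1)))) (PM (PM (PM (PM (PC 4) (PV 0)) (PV 1)) (PV 1)) (PV 2))) (PN (PM (PM (PM (PM (PM (PC 2) (PV 0)) (PV 1)) (PV 1)) (PV 2)) (PV 2)))) (PN (PM (PM (PM (PC 2) (PV 0)) (PV 0)) (PV 2)))) (PM (PM (PM (PM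 (PC 2) (PV 0)) (PV 0)) (PV 2)) (PV 2))) (PN (PM (PM (PV 0) (PV 0)) (PV 1)))) (PM (PM (PM (PM (PC 5) (PV 0)) (PV 0)) (PV 1)) (PV 2))) (PN (PM (PM (PM (PM (PM (PC 2) (PV 0)) (PV 0)) (PV 1)) (PV 2)) (PV 2)))) (PM (PM (PM (PV 0) (PV 0)) (PV 1)) (PV 1))) (PN (PM (PM (PM (PM (PM (PC 2) (PV 0)) (PV 0)) (PV 1)) (PV 1)) (PV 2)))).
Definition pN3 : pe := (PA (PA (PA (PA (PA (PA (PA (PA (PA (PA (PA (PA (PA (PA (PA (PA (PA (PA (PA (PA (PA (PA (PC 9) (PM (PC 6) (PV 2))) (PM (PV 2) (PV 2))) (PM (PC 3) (PV 1))) (PN (PM (PM (PC 8) (PV 1)) (PV 2)))) (PN (PM (PM (PM (PC 3) (PV 1)) (PV 2)) (PV 2)))) (PN (PM (PM (PM (PC 2) (PV 1)) (PV 1)) (PV 2)))) (PM (PM (PM (PM (PC 2) (PV 1)) (PV 1)) (PV 2)) (PV 2))) (PM (PC 3) (PV 0))) (PN (PM (PM (PC 8) (PV 0)) (PV 2)))) (PN (PM (PM (PM (PC 3) (PV 0)) (PV 2)) (PV 2)))) (PN (PM (PM (PC 6) (PV 0)) (PV 1)))) (PM (PM (PM (PM (PC 6) (PV 0)) (PV 1)) (PV 2)) (PV 2))) (PN (PM (PM (PV 0) (PV 1)) (PV 1)))) (PM (PM (PM (PM (PC 5) (PV 0)) (PV 1)) (PV 1)) (PV 2))) (PN (PM (PM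 (PM (PM (PM (PC 2) (PV 0)) (PV 1)) (PV 1)) (PV 2)) (PV 2)))) (PN (PM (PM (PM (PC 2) (PV 0)) (PV 0)) (PV 2)))) (PM (PM (PM (PM (PC 2) (PV 0)) (PV 0)) (PV 2)) (PV 2))) (PN (PM (PM (PV 0) (PV 0)) (PV 1)))) (PM (PM (PM (PM (PC 5) (PV 0)) (PV 0)) (PV 1)) (PV 2))) (PN (PM (PM (PM (PM (PM (PC 2) (PV 0)) (PV 0)) (PV 1)) (PV 2)) (PV 2)))) (PM (PM (PM (PV 0) (PV 0)) (PV 1)) (PV 1))) (PN (PM (PM (PM (PM (PM (PC 2) (PV 0)) (PV 0)) (PV 1)) (PV 1)) (PV 2)))).
Definition pN4 : pe := (PA (PA (PA (PA (PA (PA (PA (PA (PA (PA (PA (PA (PA (PA (PA (PA (PA (PA (PA (PA (PA (PA (PC 6) (PM (PC 2) (PV 2))) (PM (PC 2) (PV 1))) (PN (PM (PM (PC 5) (PV 1)) (PV 2)))) (PN (PM (PM (PV 1) (PV 2)) (PV 2)))) (PN (PM (PM (PV 1) (PV 1)) (PV 2)))) (PM (PM (PM (PV 1) (PV 1)) (PV 2)) (PV 2))) (PM (PC 2) (PV 0))) (PN (PM (PM (PC 5) (PV 0)) (PV 2)))) (PN (PM (PM (PV 0) (PV 2)) (PV 2)))) (PN (PM (PM (PC 8) (PV 0)) (PV 1)))) (PM (PM (PM (PC 2) (PV 0)) (PV 1)) (PV 2))) (PM (PM (PM (PM (PC 4) (PV 0)) (PV 1)) (PV 2)) (PV 2)))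 (PN (PM (PM (PM (PC 2) (PV 0)) (PV 1)) (PV 1)))) (PM (PM (PM (PM (PC 5) (PV 0)) (PV 1)) (PV 1)) (PV 2))) (PN (PM (PM (PM (PM (PM (PC 2) (PV 0)) (PV 1)) (PV 1)) (PV 2)) (PV 2)))) (PN (PM (PM (PV 0) (PV 0)) (PV 2)))) (PM (PM (PM (PV 0) (PV 0)) (PV 2)) (PV 2))) (PN (PM (PM (PM (PC 2) (PV 0)) (PV 0)) (PV 1)))) (PM (PM (PM (PM (PC 5) (PV 0)) (PV 0)) (PV 1)) (PV 2))) (PN (PM (PM (PM (PM (PM (PC 2) (PV 0)) (PV 0)) (PV 1)) (PV 2)) (PV 2)))) (PM (PM (PM (PM (PC 2) (PV 0)) (PV 0)) (PV 1)) (PV 1))) (PN (PM (PM (PM (PM (PM (PC 2) (PV 0)) (PV 0)) (PV 1)) (PV 1)) (PV 2)))).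
Definition pN5 : pe := (PA (PA (PA (PA (PA (PA (PA (PA (PA (PA (PA (PA (PA (PA (PA (PA (PA (PA (PA (PA (PA (PA (PC 9) (PM (PC 3) (PV 2))) (PM (PC 6) (PV 1))) (PN (PM (PM (PC 8) (PV 1)) (PV 2)))) (PN (PM (PM (PM (PC 2) (PV 1)) (PV 2)) (PV 2)))) (PM (PV 1) (PV 1))) (PN (PM (PM (PM (PC 3) (PV 1)) (PV 1)) (PV 2)))) (PM (PM (PM (PM (PC 2) (PV 1)) (PV 1)) (PV 2)) (PV 2))) (PM (PC 3) (PV 0))) (PN (PM (PM (PC 6) (PV 0)) (PV 2)))) (PN (PM (PM (PV 0) (PV 2)) (PV 2)))) (PN (PM (PM (PC 8) (PV 0)) (PV 1)))) (PM (PM (PM (PM (PC 5) (PV 0)) (PV 1)) (PV 2)) (PV 2))) (PN (PM (PM (PM (PC 3) (PV 0)) (PV 1)) (PV 1)))) (PM (PM (PM (PM (PC 6) (PV 0)) (PV 1)) (PV 1)) (PV 2))) (PN (PM (PM (PM (PM (PM (PC 2) (PV 0)) (PV 1)) (PV 1)) (PV 2)) (PV 2)))) (PN (PM (PM (PV 0) (PV 0)) (PV 2)))) (PM (PM (PM (PV 0) (PV 0)) (PV 2)) (PV 2))) (PN (PM (PM (PM (PC 2) (PV 0)) (PV 0)) (PV 1)))) (PM (PM (PM (PM (PC 5) (PV 0)) (PV 0)) (PV 1)) (PV 2))) (PN (PM (PM (PM (PM (PM (PC 2) (PV 0)) (PV 0)) (PV 1)) (PV 2)) (PV 2)))) (PM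 (PM (PM (PM (PC 2) (PV 0)) (PV 0)) (PV 1)) (PV 1))) (PN (PM (PM (PM (PM (PM (PC 2) (PV 0)) (PV 0)) (PV 1)) (PV 1)) (PV 2)))).
Definition pN6 : pe := (PA (PA (PA (PA (PA (PA (PA (PA (PA (PA (PA (PA (PA (PA (PA (PA (PA (PA (PA (PA (PA (PA (PC 9) (PM (PC 3) (PV 2))) (PM (PC 3) (PV 1))) (PN (PM (PM (PC 6) (PV 1)) (PV 2)))) (PN (PM (PM (PV 1) (PV 2)) (PV 2)))) (PN (PM (PM (PV 1) (PV 1)) (PV 2)))) (PM (PM (PM (PV 1) (PV 1)) (PV 2)) (PV 2))) (PM (PC 6) (PV 0))) (PN (PM (PM (PC 8) (PV 0)) (PV 2)))) (PN (PM (PM (PM (PC 2) (PV 0)) (PV 2)) (PV 2)))) (PN (PM (PM (PC 8) (PV 0)) (PV 1)))) (PM (PM (PM (PM (PC 5) (PV 0)) (PV 1)) (PV 2)) (PV 2))) (PN (PM (PM (PM (PC 2) (PV 0)) (PV 1)) (PV 1)))) (PM (PM (PM (PM (PC 5) (PV 0)) (PV 1)) (PV 1)) (PV 2))) (PN (PM (PM (PM (PM (PM (PC 2) (PV 0)) (PV 1)) (PV 1)) (PV 2)) (PV 2)))) (PM (PV 0) (PV 0))) (PN (PM (PM (PM (PC 3) (PV 0)) (PV 0)) (PV 2)))) (PM (PM (PM (PM (PC 2) (PV 0)) (PV 0)) (PV 2)) (PV 2))) (PN (PM (PM (PM (PC 3) (PV 0)) (PV 0)) (PV 1)))) (PM (PM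 (PM (PM (PC 6) (PV 0)) (PV 0)) (PV 1)) (PV 2))) (PN (PM (PM (PM (PM (PM (PC 2) (PV 0)) (PV 0)) (PV 1)) (PV 2)) (PV 2)))) (PM (PM (PM (PM (PC 2) (PV 0)) (PV 0)) (PV 1)) (PV 1))) (PN (PM (PM (PM (PM (PM (PC 2) (PV 0)) (PV 0)) (PV 1)) (PV 1)) (PV 2)))).

Lemma Phi_cvg (f0 f1 f2 : R -> R) (l0 l1 l2 : R) :
  (f0 x @[x --> +oo] --> l0)%classic -> (f1 x @[x --> +oo] --> l1)%classic ->
  (f2 x @[x --> +oo] --> l2)%classic -> 0 <= l0 <= 1/2 -> 0 <= l1 <= 1/2 -> 0 <= l2 <= 1/2 ->
  (Phi (f0 x) (f1 x) (f2 x) @[x --> +oo] --> Phi l0 l1 l2)%classic.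
Proof.
move=> h0 h1 h2 b0 b1 b2.
have hD := Dn_gt0 b0 b1 b2.
have hs : forall i, ((fun x => env3 (f0 x) (f1 x) (f2 x) i) x @[x --> +oo] --> env3 l0 l1 l2 i)%classic.
  by case=> [|[|i]] /=.
have EN := @ev_cvg _ _ (PA (PA pN1 pN2) pN4) hs.
have ED := @ev_cvg _ _ pD hs.
apply: cM; first exact: EN.
apply: cV; first by rewrite mulf_neq0 // lt0r_neq0.
apply: cM; first exact: cC.
exact: ED.
Qed.

Lemma lS_b S u : 0 <= lS S u <= 1/2.
Proof. by rewrite /lS; case: ifP => _; apply/andP; split; lra. Qed.

Lemma fp_cvg S : (fp e3 S x @[x --> +oo] --> Phi (lS S o0) (lS S o1) (lS S o2))%classic.
Proof.
have H := Phi_cvg (@rr_cvg S o0) (@rr_cvg S o1) (@rr_cvg S o2) (lS_b S o0) (lS_b S o1) (lS_b S o2).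
apply: cvg_trans H; apply: near_eq_cvg.
near=> x; rewrite fpK3 //.
Unshelve. all: by end_near.
Qed.

Lemma fp_inf_ex S : fp_inf_exists R e3 S.
Proof. by apply/cvg_ex; eexists; exact: fp_cvg. Qed.

Lemma fp_inf_val S : fp_inf R e3 S = Phi (lS S o0) (lS S o1) (lS S o2).
Proof. apply: cvg_lim; last exact: fp_cvg. exact: Rhausdorff. Qed.

End Lim.

Section Loop.
Variable R : realType.

Definition tab (s0 s1 : bool) (k : nat) : R :=
  match s0, s1 with
  | false, false => [:: 1/3; 1/3; 2/3; 1/3; 2/3; 2/3]`_k
  | true, false => [:: 3704/8741; 3582/8741; 6482/8741; 3582/8741; 6482/8741; 6396/8741]`_k
  | false, true => [:: 3582/8741; 3704/8741; 6482/8741; 3582/8741; 6396/8741; 6482/8741]`_k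
  | true, true => [:: 155/307; 155/307; 250/307; 147/307; 245/307; 245/307]`_k
  end.

Definition Hl (s0 s1 b0 b1 b2 : bool) : R :=
  match b0, b1, b2 with
  | false, false, false => 0
  | true, false, false => tab s0 s1 0
  | false, true, false => tab s0 s1 1
  | true, true, false => tab s0 s1 2
  | false, false, true => tab s0 s1 3
  | true, false, true => tab s0 s1 4
  | false, true, true => tab s0 s1 5
  | true, true, true => 1
  end.

Lemma harmL (S : {set 'I_3}) : o2 \notin S ->
  harm e3l S 1 (fun X => Hl (o0 \in S) (o1 \in S) (o0 \in X) (o1 \in X) (o2 \in X)).
Proof.
move=> n2 X nT nE.
rewrite /pick_prob card_ord sum3 !sum3c /= !fbiasE /av (negbTE n2) !mem_nextc /=.
move: nT nE; rewrite setT3 set03.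
case: (o0 \in S); case: (o1 \in S); case: (o0 \in X); case: (o1 \in X); case: (o2 \in X) => //= _ _.
all: rewrite /tab /=.
all: field; repeat (apply/andP; split); try done; apply/eqP => ?; lra.
Qed.

Lemma fpL (S : {set 'I_3}) : o2 \notin S ->
  fp e3l S 1 = (tab (o0 \in S) (o1 \in S) 0 + tab (o0 \in S) (o1 \in S) 1 + tab (o0 \in S) (o1 \in S) 3) / 3.
Proof.
move=> n2.
have K := @fp_from_eq R _ e3l S 1 ler01 hin3l o0 hprog3l
  (fun X => Hl (o0 \in S) (o1 \in S) (o0 \in X) (o1 \in X) (o2 \in X)).
rewrite /fp card_ord sum3 !(K _ _ (harmL n2)) ?inE //=.
by rewrite mulrC !mulrDl.
Qed.
End Loop.
Section Final.
Variable R : realType.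
Lemma Phi_vals :
  [/\ Phi 0 0 (1/2) = 4/7 :> R, Phi (1/2) (1/2) (1/2) = 1/3 :> R,
      Phi 0 (1/2) (1/2) = 4/9 :> R & Phi (1/2) 0 (1/2) = 4/9 :> R].
Proof. split; rewrite /Phi /N1 /N2 /N4 /Dn; by field. Qed.
End Final.

Theorem theorem3 (R : realType) :
  (exists (T : finType) (e : rel T), undirected e /\ connected_graph e /\
     exists delta : R, 0 < delta /\ ~ submodular (fun S => fp e S delta))
  /\
  (exists (T : finType) (e : rel T), undirected e /\ connected_graph e /\
     all_self_loops e /\
     exists delta : R, 0 < delta /\ ~ submodular (fun S => fp e S delta))
  /\
  (exists (T : finType) (e : rel T), undirected e /\ connected_graph e /\
     (forall S : {set T}, fp_inf_exists R e S) /\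
     ~ submodular (fun S => fp_inf R e S)).
Proof.
have notsubL : ~ submodular (fun S => fp e3l S (1 : R)).
  move=> H; have := H [set o0] [set o1].
  rewrite !fpL ?inE //= /tab /=.
  lra.
split; last split.
- exists 'I_3, e3l; split; first by [].
  split; first by move=> x y; apply: connect1.
  by exists 1; split; [exact: ltr01 | exact: notsubL].
- exists 'I_3, e3l; split; first by [].
  split; first by move=> x y; apply: connect1.
  split; first by [].
  by exists 1; split; [exact: ltr01 | exact: notsubL].
- exists 'I_3, e3; split; first by move=> x y; rewrite /e3 eq_sym.
  split.
    move=> x y; case: (eqVneq x y) => [->|h]; first exact: connect0.
    exact: connect1.
  split; first exact: fp_inf_ex.
  move=> H; have := H [set o0] [set o1].
  rewrite !fp_inf_val /lS !inE /=.
  have [v1 v2 v3 v4] := @Phi_vals R.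
  rewrite v1 v2 v3 v4; lra.
Qed.
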